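(* Let $H=\operatorname{diag}(\lambda_1,\dots,\lambda_n)$ with $\lambda_1\ge\dots\ge\lambda_{n-p}\ge0>\lambda_{n-p+1}\ge\dots\ge\lambda_n$ for some $1\le p<n$, let $L=\max(\lambda_1,-\lambda_n)$ and $0<\alpha<1/L$. Let $(\gamma_k)_{k\ge1}$, $(\beta_k)_{k\ge1}$ be nondecreasing sequences in $[0,1]$ with $\gamma_k=\beta_k$ for all $k$ and $\lim_{k\to\infty}\gamma_k=\lim_{k\to\infty}\beta_k=1$. For $i$ with $\lambda_i<0$ define $b_{i,0}=0$ and, for $k\ge1$, \[ b_{i,k}=(\beta_k+\gamma_k\alpha|\lambda_i|)\Big(1-\frac{1}{1+b_{i,k-1}}\Big)+\alpha|\lambda_i|. \] Then for all $i$ with $\lambda_i<0$, \[ \lim_{k\to\infty}b_{i,k}=\alpha|\lambda_i|+\sqrt{\alpha|\lambda_i|}\sqrt{1+\alpha|\lambda_i|}. \]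
   Context: The quantities $b_{i,k}$ describe the per-iteration growth factors $x_i^{k+1}=x_i^0\prod_{m=0}^k(1+b_{i,m})$ of the components along negative-curvature directions for the accelerated gradient iteration $y^k=x^k+\gamma_k(x^k-x^{k-1})$, $x^{k+1}=x^k+\beta_k(x^k-x^{k-1})-\alpha Hy^k$, $x^0=x^1$, applied to $f(x)=\frac12x^THx$. *)

(* Defs.v *)
From HB Require Import structures.
From mathcomp Require Import all_boot all_order all_algebra.
From mathcomp Require Import all_classical all_reals all_analysis.
Set Implicit Arguments. Unset Strict Implicit. Unset Printing Implicit Defensive.
Import Order.TTheory GRing.Theory Num.Theory.
Local Open Scope ring_scope.

Fixpoint bgrowth (R : realType) (alpha li : R) (beta gamma : nat -> R) (k : nat) : R :=
  match k with
  | 0%N => 0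
  | k'.+1 => (beta k + gamma k * (alpha * `|li|)) *
             (1 - 1 / (1 + bgrowth alpha li beta gamma k')) + alpha * `|li|
  end.

(* Main.v *)
Require Import Defs.
From HB Require Import structures.
From mathcomp Require Import all_boot all_order all_algebra.
From mathcomp Require Import all_classical all_reals all_analysis.
From mathcomp Require Import ring lra.
Import Order.TTheory GRing.Theory Num.Theory.
Import numFieldNormedType.Exports.
Local Open Scope classical_set_scope.
Local Open Scope ring_scope.

Lemma key (R : realType) (e d : nat -> R) (q : R) :
  0 <= q -> q < 1 -> (forall k, 0 <= e k) ->
  (forall k, e k.+1 <= q * e k + d k) -> d @ \oo --> 0 -> e @ \oo --> 0.
Proof.
move=> q0 q1 e0 rec /cvgrPdist_le hd; apply/cvgrPdist_le => eps eps0.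
have dpos : 0 < eps * (1 - q) / 2 by apply: divr_gt0 => //; apply: mulr_gt0; lra.
case: (hd _ dpos) => N _ HN.
have bnd : forall m, e (N + m)%N <= q ^+ m * e N + eps / 2.
  elim=> [|m IH]; first by rewrite expr0 mul1r addn0; lra.
  rewrite addnS exprS.
  have dN : d (N + m)%N <= eps * (1 - q) / 2.
    have := HN (N + m)%N (leq_addr _ _); rewrite sub0r normrN => h.
    exact: le_trans (ler_norm _) h.
  apply: (le_trans (rec _)).
  have : q * e (N + m)%N <= q * (q ^+ m * e N + eps / 2) by apply: ler_wpM2l.
  nra.
have /cvgrPdist_le hg := @cvg_expr R q (ltac:(rewrite ger0_norm //)).
have e2 : 0 < eps / 2 / (1 + e N).
  by apply: divr_gt0; [apply: divr_gt0 => //| have := e0 N; lra].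
case: (hg _ e2) => M _ HM.
exists (N + M)%N => // k /= Hk.
rewrite sub0r normrN ger0_norm //.
have -> : k = (N + (k - N))%N by rewrite subnKC // (leq_trans (leq_addr _ _) Hk).
apply: (le_trans (bnd _)).
have hM : q ^+ (k - N) <= eps / 2 / (1 + e N).
  have := HM (k - N)%N; rewrite /= sub0r normrN => h.
  apply: le_trans (ler_norm _) (h _); rewrite leq_subRL ?(leq_trans (leq_addr _ _) Hk) //.
have eN := e0 N.
have qm : 0 <= q ^+ (k - N) by apply: exprn_ge0.
have : q ^+ (k - N) * (1 + e N) <= eps / 2.
  by rewrite -ler_pdivlMr //; lra.
nra.
Qed.

Lemma step (R : realType) (a c x s : R) :
  0 < a -> 0 <= c <= 1 -> a <= x -> a <= s -> (s - a) ^+ 2 = a * (1 + a) ->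
  `|(c + c * a) * (1 - 1 / (1 + x)) + a - s| <= (1 - c) * (1 + a) + `|x - s| / (1 + a).
Proof.
move=> a0 /andP[c0 c1] ax as_ hr.
set u := 1 / (1 + x); set v := 1 / (1 + s); set w := 1 / (1 + a).
have hu : u * (1 + x) = 1 by rewrite /u div1r mulVf //; apply: lt0r_neq0; lra.
have hv : v * (1 + s) = 1 by rewrite /v div1r mulVf //; apply: lt0r_neq0; lra.
have hw : w * (1 + a) = 1 by rewrite /w div1r mulVf //; apply: lt0r_neq0; lra.
have u0 : 0 < u by rewrite /u divr_gt0 //; lra.
have v0 : 0 < v by rewrite /v divr_gt0 //; lra.
have w0 : 0 < w by rewrite /w divr_gt0 //; lra.
have uw : u <= w.
  rewrite /u /w ler_pdivlMr; last lra.
  rewrite mulrAC ler_pdivrMr; last lra. lra.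
have vw : v <= w.
  rewrite /v /w ler_pdivlMr; last lra.
  rewrite mulrAC ler_pdivrMr; last lra. lra.
have wdef : w = 1 / (1 + a) by [].
clearbody u v w.
have sv : s - a = (1 + a) * (1 - v).
  have : (s - a) * (1 + s) = (1 + a) * s by nra.
  move=> h; have : ((s - a) - (1 + a) * (1 - v)) * (1 + s) = 0.
    rewrite mulrBl h; nra.
  move/eqP; rewrite mulf_eq0 => /orP[/eqP h2|/eqP h2]; lra.
have vu : v - u = (x - s) * u * v.
  have -> : (x - s) * u * v = (u * (1 + x)) * v - (v * (1 + s)) * u by ring.
  by rewrite hu hv; ring.
have eq1 : (c + c * a) * (1 - u) + a - s =
   (1 + a) * ((c - 1) * (1 - u)) + (1 + a) * ((x - s) * u * v).
  rewrite -vu; nra.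
rewrite eq1 (le_trans (ler_normD _ _)) //.
rewrite !normrM !(ger0_norm (_ : 0 <= 1 + a)); last 2 first; try lra.
rewrite (ler0_norm (_ : c - 1 <= 0)); last lra.
rewrite (ger0_norm (_ : 0 <= 1 - u)); last first.
  have : u <= 1 by nra.
  lra.
rewrite (ger0_norm (ltW u0)) (ger0_norm (ltW v0)).
have n0 := normr_ge0 (x - s).
have h1 : (1 + a) * (- (c - 1) * (1 - u)) <= (1 - c) * (1 + a).
  have : 0 <= (1 - c) * (1 + a) * u by rewrite !mulr_ge0 //; lra.
  nra.
have h2 : (1 + a) * (`|x - s| * u * v) <= `|x - s| * w.
  have : (1 + a) * u * v <= w by nra.
  nra.
rewrite wdef mul1r in h2.
lra.
Qed.

Theorem corollary4p3 (R : realType) (n p : nat) (lam : nat -> R) (alpha : R)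
    (gamma beta : nat -> R) :
  (1 <= p)%N -> (p < n)%N ->
  (* eigenvalues lam 1, ..., lam n of H = diag(lam 1, ..., lam n), nonincreasing *)
  (forall i j : nat, (1 <= i)%N -> (i <= j)%N -> (j <= n)%N -> lam j <= lam i) ->
  (forall i : nat, (1 <= i)%N -> (i <= n - p)%N -> 0 <= lam i) ->
  (forall i : nat, (n - p < i)%N -> (i <= n)%N -> lam i < 0) ->
  0 < alpha -> alpha < 1 / Num.max (lam 1%N) (- lam n) ->
  (forall k : nat, (1 <= k)%N -> gamma k <= gamma k.+1) ->
  (forall k : nat, (1 <= k)%N -> beta k <= beta k.+1) ->
  (forall k : nat, (1 <= k)%N -> 0 <= gamma k <= 1) ->
  (forall k : nat, (1 <= k)%N -> 0 <= beta k <= 1) ->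
  (forall k : nat, (1 <= k)%N -> gamma k = beta k) ->
  gamma @ \oo --> (1 : R) ->
  beta @ \oo --> (1 : R) ->
  forall i : nat, (1 <= i)%N -> (i <= n)%N -> lam i < 0 ->
    bgrowth alpha (lam i) beta gamma @ \oo -->
      alpha * `|lam i| + Num.sqrt (alpha * `|lam i|) * Num.sqrt (1 + alpha * `|lam i|).
Proof.
move=> hp hpn hmon hpos hneg a0 aL _ _ hg hb hgb _ hbl i i1 iN li.
set a := alpha * `|lam i|.
have apos : 0 < a by apply: mulr_gt0 => //; rewrite ltr0_norm // oppr_gt0.
set s := a + Num.sqrt a * Num.sqrt (1 + a).
have sa : s - a = Num.sqrt a * Num.sqrt (1 + a) by rewrite /s; ring.
have hr : (s - a) ^+ 2 = a * (1 + a).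
  by rewrite sa exprMn !sqr_sqrtr //; lra.
have as_ : a <= s.
  have : 0 <= Num.sqrt a * Num.sqrt (1 + a) by rewrite mulr_ge0 ?sqrtr_ge0.
  lra.
have bS : forall k, 0 <= bgrowth alpha (lam i) beta gamma k ->
    a <= bgrowth alpha (lam i) beta gamma k.+1.
  move=> k hk /=; rewrite -/a.
  have := hb k.+1 isT => /andP[b0 b1].
  have := hg k.+1 isT => /andP[g0 g1].
  have : 0 <= 1 - 1 / (1 + bgrowth alpha (lam i) beta gamma k).
    rewrite subr_ge0 ler_pdivrMr; lra.
  have : 0 <= beta k.+1 + gamma k.+1 * a by rewrite addr_ge0 // mulr_ge0 //; lra.
  nra.
have b0 : forall k, 0 <= bgrowth alpha (lam i) beta gamma k.
  case=> [|k] /=; first by [].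
  have : a <= bgrowth alpha (lam i) beta gamma k.+1.
    elim: k => [|k IH]; first by apply: bS.
    by apply: bS; lra.
  simpl; lra.
set b := bgrowth alpha (lam i) beta gamma.
pose e k := `|b k.+1 - s|.
pose d k := (1 - beta (k + 2)%N) * (1 + a).
pose q := 1 / (1 + a).
have q0 : 0 <= q by rewrite /q divr_ge0 //; lra.
have q1 : q < 1 by rewrite /q ltr_pdivrMr; lra.
have e0 : forall k, 0 <= e k by move=> k; exact: normr_ge0.
have rec : forall k, e k.+1 <= q * e k + d k.
  move=> k; rewrite /e /d addn2.
  have -> : b k.+2 = (beta k.+2 + gamma k.+2 * a) *
      (1 - 1 / (1 + b k.+1)) + a by [].
  rewrite hgb //.
  have := @step R a (beta k.+2) (b k.+1) s apos (hb k.+2 isT) (bS k (b0 k)) as_ hr.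
  rewrite -/b.
  have -> : `|b k.+1 - s| / (1 + a) = q * `|b k.+1 - s| by rewrite /q mul1r mulrC.
  lra.
have h2 : (fun k => beta (k + 2)%N) @ \oo --> (1 : R) by rewrite cvg_shiftn.
have hd : d @ \oo --> (0 : R).
  have := cvgM (cvgB (cvg_cst (1 : R)) h2) (cvg_cst (1 + a)).
  rewrite subrr mul0r. move=> h. exact: h.
have he := @key R e d q q0 q1 e0 rec hd.
rewrite -cvg_shiftS.
apply/cvgrPdist_le => eps eps0.
move/cvgrPdist_le: he => /(_ eps eps0).
apply: filterS => k /=.
by rewrite sub0r normrN normr_id distrC.
Qed.
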